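(* Let $t>0$ be a real number such that $\zeta(\tfrac12+it)=0$. For $k\ge 1$ let $H_k=\sum_{n=1}^{k}\frac1n$ and $$D_k(t)=2\sum_{n=1}^{k}\sum_{m=n+1}^{k}\frac{(-1)^{m}(-1)^{n+1}}{\sqrt{mn}}\cos\!\big(t\log(m/n)\big).$$ Then $\lim_{k\to\infty}\big(H_k-D_k(t)\big)=0$. Consequently $$\gamma=\lim_{k\to\infty}\Big(D_k(t)-\log k\Big),$$ where $\gamma=\lim_{k\to\infty}(H_k-\log k)$ is the Euler–Mascheroni constant.
   Context: $\zeta$ denotes the Riemann zeta function (analytically continued to $\mathbb{C}\setminus\{1\}$). The hypothesis says that $\tfrac12+it$ is a non-trivial zero of $\zeta$ lying on the critical line $\Re(s)=\tfrac12$. *)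

(* Defs.v *)
From Stdlib Require Import Reals Lra.
Open Scope R_scope.

Fixpoint sum1 (f : nat -> R) (k : nat) : R :=
  match k with
  | O => 0
  | S k' => sum1 f k' + f (S k')
  end.

Definition Hk (k : nat) : R := sum1 (fun n => / INR n) k.

Definition Dk (t : R) (k : nat) : R :=
  2 * sum1 (fun n =>
         sum1 (fun m =>
                 if Nat.ltb n m then
                   (-1) ^ m * (-1) ^ (n + 1) / sqrt (INR m * INR n)
                   * cos (t * ln (INR m / INR n))
                 else 0) k) k.

Definition Cx : Type := (R * R)%type.
Definition Cx_div (z w : Cx) : Cx :=
  let (a, b) := z in let (c, d) := w in
  ((a * c + b * d) / (c * c + d * d), (b * c - a * d) / (c * c + d * d)).

(* Partial sums of the Dirichlet eta series eta(s) = sum_{n>=1} (-1)^(n+1) n^(-s)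
   at s = 1/2 + i t, using n^(-1/2 - i t) = n^(-1/2) (cos(t ln n) - i sin(t ln n)). *)
Definition eta_partial_re (t : R) (N : nat) : R :=
  sum1 (fun n => (-1) ^ (n + 1) / sqrt (INR n) * cos (t * ln (INR n))) N.
Definition eta_partial_im (t : R) (N : nat) : R :=
  sum1 (fun n => - ((-1) ^ (n + 1) / sqrt (INR n) * sin (t * ln (INR n)))) N.

Definition eta_crit_is (t : R) (z : Cx) : Prop :=
  Un_cv (eta_partial_re t) (fst z) /\ Un_cv (eta_partial_im t) (snd z).

(* 1 - 2^(1 - s) at s = 1/2 + i t, i.e. 1 - sqrt 2 (cos(t ln 2) - i sin(t ln 2)). *)
Definition eta_factor_crit (t : R) : Cx :=
  (1 - sqrt 2 * cos (t * ln 2), sqrt 2 * sin (t * ln 2)).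

(* On Re s > 0 (s <> 1), the analytically continued zeta satisfies
   zeta(s) = eta(s) / (1 - 2^(1-s)).  zeta(1/2 + i t) = z: *)
Definition zeta_crit_is (t : R) (z : Cx) : Prop :=
  exists e : Cx, eta_crit_is t e /\ Cx_div e (eta_factor_crit t) = z.

(* Main.v *)
Require Import Defs.
From Stdlib Require Import Reals Lra Lia.
Open Scope R_scope.

Lemma ln_le_sub1 y : 0 < y -> ln y <= y - 1.
Proof. intro H. pose proof (exp_ineq1_le (ln y)). rewrite exp_ln in H0; lra. Qed.

Lemma sum1_ext_le f g k : (forall m, (1 <= m <= k)%nat -> f m = g m) -> sum1 f k = sum1 g k.
Proof.
  induction k; intro H; simpl; auto.
  rewrite IHk by (intros; apply H; lia). rewrite H by lia. reflexivity.
Qed.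

Lemma sum1_scal c f k : sum1 (fun n => f n * c) k = sum1 f k * c.
Proof. induction k; simpl; [ring| rewrite IHk; ring]. Qed.

Lemma sum1_plus f g k : sum1 (fun n => f n + g n) k = sum1 f k + sum1 g k.
Proof. induction k; simpl; [ring| rewrite IHk; ring]. Qed.

Lemma sum1_opp f k : sum1 (fun n => - f n) k = - sum1 f k.
Proof. induction k; simpl; [ring| rewrite IHk; ring]. Qed.

Lemma m1sq n : (-1) ^ n * (-1) ^ n = 1.
Proof. rewrite <- pow_add. replace (n+n)%nat with (2*n)%nat by lia. rewrite pow_mult. 
  replace ((-1)^2) with 1 by ring. apply pow1. Qed.

Definition aa (n : nat) : R := (-1) ^ (n + 1) / sqrt (INR n).
Definition th (t : R) (n : nat) : R := t * ln (INR n).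

Lemma g_eq t n m : (1 <= n)%nat -> (1 <= m)%nat ->
  (-1) ^ m * (-1) ^ (n + 1) / sqrt (INR m * INR n) * cos (t * ln (INR m / INR n))
  = - (aa n * cos (th t n) * (aa m * cos (th t m)) + (- (aa n * sin (th t n))) * (- (aa m * sin (th t m)))).
Proof.
  intros Hn Hm.
  assert (Pn : 0 < INR n) by (apply lt_0_INR; lia).
  assert (Pm : 0 < INR m) by (apply lt_0_INR; lia).
  assert (Sn : 0 < sqrt (INR n)) by (apply sqrt_lt_R0; lra).
  assert (Sm : 0 < sqrt (INR m)) by (apply sqrt_lt_R0; lra).
  rewrite sqrt_mult by lra. unfold Rdiv at 2. rewrite ln_mult, ln_Rinv by (try apply Rinv_0_lt_compat; lra).
  replace (t * (ln (INR m) + - ln (INR n))) with (th t m - th t n) by (unfold th; ring).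
  rewrite cos_minus. unfold aa. rewrite !pow_add. generalize ((-1)^n) ((-1)^m) (cos (th t n)) (cos (th t m)) (sin (th t n)) (sin (th t m)); intros. field; lra.
Qed.

Definition GG t n m : R := if Nat.ltb n m then
                   (-1) ^ m * (-1) ^ (n + 1) / sqrt (INR m * INR n)
                   * cos (t * ln (INR m / INR n))
                 else 0.

Lemma sum1_S f k : sum1 f (S k) = sum1 f k + f (S k).
Proof. reflexivity. Qed.

Lemma sum1_zero k : sum1 (fun _ => 0) k = 0.
Proof. induction k; simpl; [ring | rewrite IHk; ring]. Qed.

Lemma Dk_S t k : Dk t (S k) = Dk t k + 2 * sum1 (fun n => GG t n (S k)) k.
Proof.
  change (Dk t (S k)) with (2 * sum1 (fun n => sum1 (GG t n) (S k)) (S k)).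
  change (Dk t k) with (2 * sum1 (fun n => sum1 (GG t n) k) k).
  rewrite sum1_S.
  assert (H0 : sum1 (GG t (S k)) (S k) = 0).
  { rewrite <- (sum1_zero (S k)). apply sum1_ext_le. intros m Hm.
    unfold GG. replace (Nat.ltb (S k) m) with false; auto.
    symmetry. apply Nat.ltb_ge. lia. }
  rewrite H0. change (fun n => sum1 (GG t n) (S k)) with (fun n => sum1 (GG t n) k + GG t n (S k)).
  rewrite sum1_plus. ring.
Qed.

Definition re t k := eta_partial_re t k.
Definition im t k := eta_partial_im t k.

Lemma re_S t k : re t (S k) = re t k + aa (S k) * cos (th t (S k)).
Proof. reflexivity. Qed.
Lemma im_S t k : im t (S k) = im t k + - (aa (S k) * sin (th t (S k))).
Proof. reflexivity. Qed.

Lemma aa_sq k : aa (S k) * aa (S k) = / INR (S k).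
Proof.
  assert (P : 0 < INR (S k)) by (apply lt_0_INR; lia).
  assert (S0 : 0 < sqrt (INR (S k))) by (apply sqrt_lt_R0; lra).
  unfold aa. pose proof (m1sq (S k + 1)). pose proof (sqrt_sqrt (INR (S k))).
  unfold Rdiv. replace ((-1) ^ (S k + 1) * / sqrt (INR (S k)) * ((-1) ^ (S k + 1) * / sqrt (INR (S k)))) with (((-1) ^ (S k + 1) * (-1) ^ (S k + 1)) * / (sqrt (INR (S k)) * sqrt (INR (S k)))) by (field; lra). rewrite H, H0 by lra. ring.
Qed.

Lemma key t k : Hk k - Dk t k = re t k * re t k + im t k * im t k.
Proof.
  induction k.
  - unfold Hk, Dk, re, im, eta_partial_re, eta_partial_im; simpl; ring.
  - rewrite Dk_S, re_S, im_S.
    change (Hk (S k)) with (Hk k + / INR (S k)).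
    assert (E : sum1 (fun n => GG t n (S k)) k =
      - (sum1 (fun n => aa n * cos (th t n)) k * (aa (S k) * cos (th t (S k)))
         + sum1 (fun n => - (aa n * sin (th t n))) k * (- (aa (S k) * sin (th t (S k)))))).
    { rewrite <- !sum1_scal, <- sum1_plus, <- sum1_opp. apply sum1_ext_le.
      intros m Hm. unfold GG. replace (Nat.ltb m (S k)) with true.
      2:{ symmetry. apply Nat.ltb_lt. lia. }
      apply g_eq; lia. }
    rewrite E. change (sum1 (fun n => aa n * cos (th t n)) k) with (re t k).
    change (sum1 (fun n => - (aa n * sin (th t n))) k) with (im t k).
    rewrite <- aa_sq. pose proof (sin2_cos2 (th t (S k))). unfold Rsqr in H.
    transitivity (Hk k - Dk t k + aa (S k) * aa (S k) * (sin (th t (S k)) * sin (th t (S k)) + cos (th t (S k)) * cos (th t (S k)))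
       + 2 * (re t k * (aa (S k) * cos (th t (S k))) + im t k * - (aa (S k) * sin (th t (S k))))).
    + rewrite H. ring.
    + rewrite IHk. ring.
Qed.

Lemma ln_ratio_le a b : 0 < a -> 0 < b -> ln a - ln b <= a / b - 1.
Proof.
  intros Ha Hb. replace (ln a - ln b) with (ln (a / b)).
  - apply ln_le_sub1. apply Rdiv_lt_0_compat; lra.
  - unfold Rdiv. rewrite ln_mult, ln_Rinv by (try apply Rinv_0_lt_compat; lra). ring.
Qed.

Lemma Hk_ge k : ln (INR (S k)) <= Hk k.
Proof.
  induction k.
  - simpl. rewrite ln_1. unfold Hk; simpl; lra.
  - change (Hk (S k)) with (Hk k + / INR (S k)).
    assert (P : 0 < INR (S k)) by (apply lt_0_INR; lia).
    pose proof (ln_ratio_le (INR (S (S k))) (INR (S k)) ltac:(apply lt_0_INR; lia) P).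
    rewrite S_INR with (n := S k) in H at 2. 
    replace ((INR (S k) + 1) / INR (S k) - 1) with (/ INR (S k)) in H by (field; lra).
    lra.
Qed.

Definition ww k := Hk (S k) - ln (INR (S k)).

Lemma ww_dec : Un_decreasing ww.
Proof.
  intro j. unfold ww. change (Hk (S (S j))) with (Hk (S j) + / INR (S (S j))).
  assert (P : 0 < INR (S j)) by (apply lt_0_INR; lia).
  assert (P2 : 0 < INR (S (S j))) by (apply lt_0_INR; lia).
  pose proof (ln_ratio_le _ _ P P2).
  replace (INR (S j) / INR (S (S j)) - 1) with (- / INR (S (S j))) in H.
  2:{ rewrite S_INR with (n := S j). field. rewrite <- S_INR. lra. }
  lra.
Qed.

Lemma ww_ge0 k : 0 <= ww k.
Proof.
  unfold ww. pose proof (Hk_ge (S k)).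
  assert (ln (INR (S k)) < ln (INR (S (S k)))).
  { apply ln_increasing. apply lt_0_INR; lia. apply lt_INR; lia. }
  lra.
Qed.

Lemma gamma_exists : exists g, Un_cv (fun k => Hk k - ln (INR k)) g.
Proof.
  assert (Hlb : has_lb ww).
  { exists 0. intros x [i ->]. unfold opp_seq. pose proof (ww_ge0 i). lra. }
  destruct (decreasing_cv ww ww_dec Hlb) as [l Hl].
  exists l. intros eps He. destruct (Hl eps He) as [N HN].
  exists (S N). intros n Hn. destruct n as [|j]; [lia|].
  apply (HN j). lia.
Qed.

Lemma eta_zero t e : eta_crit_is t e -> Cx_div e (eta_factor_crit t) = (0, 0) ->
  fst e = 0 /\ snd e = 0.
Proof.
  destruct e as [a b]. intros _ H. unfold Cx_div, eta_factor_crit in H.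
  set (c := 1 - sqrt 2 * cos (t * ln 2)) in H.
  set (d := sqrt 2 * sin (t * ln 2)) in H.
  injection H as H1 H2.
  assert (Nz : c * c + d * d <> 0).
  { intro Z. assert (c = 0) by nra. assert (d = 0) by nra.
    pose proof (sin2_cos2 (t * ln 2)). unfold Rsqr in H3.
    pose proof (sqrt_sqrt 2 ltac:(lra)). pose proof (sqrt_lt_R0 2 ltac:(lra)).
    unfold c, d in *. 
    assert (sin (t * ln 2) = 0) by nra. nra. }
  assert (Pz : 0 < c * c + d * d) by nra.
  assert (E1 : a * c + b * d = 0).
  { apply (Rmult_eq_reg_r (/ (c * c + d * d))). rewrite Rmult_0_l. exact H1.
    apply Rinv_neq_0_compat; lra. }
  assert (E2 : b * c - a * d = 0).
  { apply (Rmult_eq_reg_r (/ (c * c + d * d))). rewrite Rmult_0_l. exact H2.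
    apply Rinv_neq_0_compat; lra. }
  simpl. split.
  - assert (a * (c * c + d * d) = 0).
    { replace (a * (c * c + d * d)) with (c * (a * c + b * d) - d * (b * c - a * d)) by ring.
      rewrite E1, E2; ring. }
    destruct (Rmult_integral _ _ H); [assumption | lra].
  - assert (b * (c * c + d * d) = 0).
    { replace (b * (c * c + d * d)) with (d * (a * c + b * d) + c * (b * c - a * d)) by ring.
      rewrite E1, E2; ring. }
    destruct (Rmult_integral _ _ H); [assumption | lra].
Qed.

Theorem mainTheorem1 (t : R) (ht : 0 < t) (hzero : zeta_crit_is t (0, 0)) :
  Un_cv (fun k => Hk k - Dk t k) 0 /\
  (exists gamma : R,
      Un_cv (fun k => Hk k - ln (INR k)) gamma /\
      Un_cv (fun k => Dk t k - ln (INR k)) gamma).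
Proof.
  destruct hzero as [e [He Hd]].
  destruct (eta_zero t e He Hd) as [E1 E2].
  destruct He as [Hre Him]. rewrite E1 in Hre. rewrite E2 in Him.
  assert (C : Un_cv (fun k => Hk k - Dk t k) 0).
  { apply Un_cv_ext with (un := fun k => re t k * re t k + im t k * im t k).
    - intro k. symmetry. apply key.
    - replace 0 with (0 * 0 + 0 * 0) by ring.
      apply CV_plus; apply CV_mult; assumption. }
  split; [exact C|].
  destruct gamma_exists as [g Hg]. exists g. split; [exact Hg|].
  apply Un_cv_ext with (un := fun k => (Hk k - ln (INR k)) - (Hk k - Dk t k)).
  - intro k. ring.
  - replace g with (g - 0) by ring. apply CV_minus; assumption.
Qed.
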